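(* Let $W \in \mathbb{R}^{m \times n}$ have full rank, $\mathrm{rank}(W) = \min(m,n)$. For a parameterized map $\theta \mapsto f_\theta(W) \in \mathbb{R}^{m\times n}$ define its rank capacity $$\mathcal{R}(f_\theta; W) = \max_\theta \mathrm{rank}(f_\theta(W)) - \min_\theta \mathrm{rank}(f_\theta(W)).$$ (Column-sliced form.) Suppose $n = n_0 n_1$ and write $W = [W_1, \dots, W_{n_1}]$ with $W_i \in \mathbb{R}^{m \times n_0}$. For each $i$ let $W_i = P_i Q_i$ be a full-rank factorization with $P_i \in \mathbb{R}^{m \times r_c}$, $Q_i \in \mathbb{R}^{r_c \times n_0}$, $r_c = \min(m, n_0)$. Keep the $P_i$ fixed, let $\theta = (\widetilde Q_1, \dots, \widetilde Q_{n_1})$ range over all tuples of arbitrary matrices $\widetilde Q_i \in \mathbb{R}^{r_c \times n_0}$, and set $f_\theta(W) = [P_1 \widetilde Q_1, \dots, P_{n_1}\widetilde Q_{n_1}]$. Then $\mathcal{R}(f_\theta; W) = \mathrm{rank}([P_1, \dots, P_{n_1}])$. In particular, if $m \le n$ then $\mathcal{R}(f_\theta; W) = m$. (Row-sliced form.) Suppose $m = m_0 m_1$ and write $W$ as the vertical stack of blocks $W_1, \dots, W_{m_1}$ with $W_j \in \mathbb{R}^{m_0 \times n}$. For each $j$ let $W_j = U_j V_j$ be a full-rank factorization with $U_j \in \mathbb{R}^{m_0 \times r_r}$, $V_j \in \mathbb{R}^{r_r \times n}$, $r_r = \min(m_0, n)$. Keep the $V_j$ fixed, let $\phi = (\widetilde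 U_1,\dots,\widetilde U_{m_1})$ range over all tuples of arbitrary matrices $\widetilde U_j \in \mathbb{R}^{m_0 \times r_r}$, and let $g_\phi(W)$ be the vertical stack of $\widetilde U_1 V_1, \dots, \widetilde U_{m_1} V_{m_1}$. Then $\mathcal{R}(g_\phi; W) = \mathrm{rank}([V_1^\top, \dots, V_{m_1}^\top])$. In particular, if $n \le m$ then $\mathcal{R}(g_\phi; W) = n$.
   Context: A full-rank factorization $A = PQ$ of an $a\times b$ matrix with inner dimension $r=\min(a,b)$ is any such product factorization (e.g. obtained from an SVD); $[A_1,\dots,A_s]$ denotes horizontal concatenation. *)

(* Defs.v *)
From HB Require Import structures.
From mathcomp Require Import all_boot all_order all_algebra.
Set Implicit Arguments. Unset Strict Implicit. Unset Printing Implicit Defensive.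
Import Order.TTheory GRing.Theory Num.Theory.
Local Open Scope ring_scope.

Definition rank_capacity_is {R : fieldType} {T : Type} {m n : nat}
  (f : T -> 'M[R]_(m, n)) (c : nat) : Prop :=
  exists tmax tmin : T,
    (forall t, (\rank (f t) <= \rank (f tmax))%N) /\
    (forall t, (\rank (f tmin) <= \rank (f t))%N) /\
    c = (\rank (f tmax) - \rank (f tmin))%N.

Lemma sum_const_ordE (k l : nat) : (k * l)%N = (\sum_(i < l) k)%N.
Proof. by rewrite big_const_ord iter_addn_0 mulnC. Qed.

Definition colslice {R : Type} {m n0 n1 : nat} (W : 'M[R]_(m, n0 * n1))
  (i : 'I_n1) : 'M[R]_(m, n0) :=
  @submxrow R n1 (fun _ => n0) m (castmx (erefl m, sum_const_ordE n0 n1) W) i.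

Definition colcat {R : Type} {m n0 n1 : nat} (B : 'I_n1 -> 'M[R]_(m, n0))
  : 'M[R]_(m, n0 * n1) :=
  castmx (erefl m, esym (sum_const_ordE n0 n1)) (@mxrow R n1 (fun _ => n0) m B).

Definition rowslice {R : Type} {m0 m1 n : nat} (W : 'M[R]_(m0 * m1, n))
  (j : 'I_m1) : 'M[R]_(m0, n) :=
  @submxcol R m1 (fun _ => m0) n (castmx (sum_const_ordE m0 m1, erefl n) W) j.

Definition rowcat {R : Type} {m0 m1 n : nat} (B : 'I_m1 -> 'M[R]_(m0, n))
  : 'M[R]_(m0 * m1, n) :=
  castmx (esym (sum_const_ordE m0 m1), erefl n) (@mxcol R m1 (fun _ => m0) n B).

(* Main.v *)
Require Import Defs.
From HB Require Import structures.
From mathcomp Require Import all_boot all_order all_algebra.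
Import Order.TTheory GRing.Theory Num.Theory.
Local Open Scope ring_scope.

Lemma rank_cast (F : fieldType) m1 n1 m2 n2 (e : (m1 = m2) * (n1 = n2)) (A : 'M[F]_(m1, n1)) :
  \rank (castmx e A) = \rank A.
Proof. by case: e A => e1 e2; case: m2 / e1; case: n2 / e2 => A; rewrite castmx_id. Qed.

Lemma col_upper (F : fieldType) (m r n0 n1 : nat) (P : 'I_n1 -> 'M[F]_(m, r))
  (Qt : 'I_n1 -> 'M[F]_(r, n0)) :
  (\rank (\mxrow_(i < n1) (P i *m Qt i)) <= \rank (\mxrow_(i < n1) P i))%N.
Proof.
have -> : \mxrow_(i < n1) (P i *m Qt i) =
          \mxrow_(i < n1) P i *m \mxblock_(i < n1, j < n1)
             (if i == j then conform_mx 0 (Qt i) else 0 : 'M[F]_(r, n0)).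
  rewrite mul_mxrow_mxblock; apply/eq_mxrow => j.
  rewrite (bigD1 j) //= eqxx conform_mx_id big1 ?addr0 // => i /negbTE ->.
  by rewrite mulmx0.
exact: mxrankM_maxl.
Qed.

Lemma col_attain (F : fieldType) (m r n0 n1 : nat) (P : 'I_n1 -> 'M[F]_(m, r))
  (le_r : (r <= n0)%N) :
  \rank (\mxrow_(i < n1) (P i *m (pid_mx r : 'M_(r, n0)))) = \rank (\mxrow_(i < n1) P i).
Proof.
apply/eqP; rewrite eqn_leq col_upper /=.
have -> : \mxrow_(i < n1) P i =
   \mxrow_(i < n1) (P i *m (pid_mx r : 'M_(r, n0))) *m
   \mxblock_(i < n1, j < n1)
     (if i == j then conform_mx 0 (pid_mx r : 'M[F]_(n0, r)) else 0 : 'M[F]_(n0, r)).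
  rewrite mul_mxrow_mxblock; apply/eq_mxrow => j.
  rewrite (bigD1 j) //= eqxx conform_mx_id big1 ?addr0; last first.
    by move=> i /negbTE ->; rewrite mulmx0.
  by rewrite -mulmxA mul_pid_mx !minnn (minn_idPr le_r) pid_mx_1 mulmx1.
exact: mxrankM_maxl.
Qed.

Theorem lemma2 (R : realFieldType) :
  (* Column-sliced form: n = n0 * n1. *)
  (forall (m n0 n1 : nat) (W : 'M[R]_(m, n0 * n1))
          (P : 'I_n1 -> 'M[R]_(m, minn m n0))
          (Q : 'I_n1 -> 'M[R]_(minn m n0, n0)),
      \rank W = minn m (n0 * n1) ->
      (forall i, colslice W i = P i *m Q i) ->
      let f := fun Qt : 'I_n1 -> 'M[R]_(minn m n0, n0) =>
                 colcat (fun i => P i *m Qt i) in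
      rank_capacity_is f (\rank (\mxrow_(i < n1) P i)) /\
      ((m <= n0 * n1)%N -> rank_capacity_is f m)) /\
  (* Row-sliced form: m = m0 * m1. *)
  (forall (m0 m1 n : nat) (W : 'M[R]_(m0 * m1, n))
          (V : 'I_m1 -> 'M[R]_(minn m0 n, n))
          (U : 'I_m1 -> 'M[R]_(m0, minn m0 n)),
      \rank W = minn (m0 * m1) n ->
      (forall j, rowslice W j = U j *m V j) ->
      let g := fun Ut : 'I_m1 -> 'M[R]_(m0, minn m0 n) =>
                 rowcat (fun j => Ut j *m V j) in
      rank_capacity_is g (\rank (\mxrow_(j < m1) (V j)^T)) /\
      ((n <= m0 * m1)%N -> rank_capacity_is g n)).
Proof.
split.
  move=> m n0 n1 W P Q rW hW f.
  have rf : forall Qt, \rank (f Qt) = \rank (\mxrow_(i < n1) (P i *m Qt i)).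
    by move=> Qt; rewrite /f /colcat rank_cast.
  have cap : rank_capacity_is f (\rank (\mxrow_(i < n1) P i)).
    exists (fun _ => pid_mx (minn m n0)), (fun _ => 0).
    rewrite !rf col_attain ?geq_minr //.
    have -> : \mxrow_(i < n1) (P i *m (0 : 'M[R]_(minn m n0, n0))) = 0.
      by under eq_mxrow do rewrite mulmx0; exact: mxrow0.
    rewrite mxrank0 subn0; split; last by split.
    by move=> t; rewrite rf col_upper.
  split => // le_m.
  suff E : \rank (\mxrow_(i < n1) P i) = m by move: cap; rewrite E.
  apply/eqP; rewrite eqn_leq rank_leq_row /=.
  apply: (@leq_trans (minn m (n0 * n1))); first by rewrite (minn_idPl le_m).

  rewrite -rW.
  have -> : W = castmx (erefl m, esym (sum_const_ordE n0 n1))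
                  (\mxrow_(i < n1) (P i *m Q i)).
    rewrite -(eq_mxrow hW) /colslice submxrowK castmx_comp castmx_id //.
  by rewrite rank_cast col_upper.
move=> m0 m1 n W V U rW hW g.
have rg : forall Ut, \rank (g Ut) = \rank (\mxrow_(j < m1) ((V j)^T *m (Ut j)^T)).
  move=> Ut; rewrite /g /rowcat rank_cast -mxrank_tr tr_mxcol.
  by congr (\rank _); apply/eq_mxrow => j; rewrite trmx_mul.
have cap : rank_capacity_is g (\rank (\mxrow_(j < m1) (V j)^T)).
  exists (fun _ => (pid_mx (minn m0 n))^T), (fun _ => 0).
  rewrite !rg.
  under eq_mxrow do rewrite trmxK.
  rewrite col_attain ?geq_minl //.
  have -> : \mxrow_(j < m1) ((V j)^T *m (0 : 'M[R]_(m0, minn m0 n))^T) = 0.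
    by under eq_mxrow do rewrite trmx0 mulmx0; exact: mxrow0.
  rewrite mxrank0 subn0; split; last by split.
  by move=> t; rewrite rg col_upper.
split => // le_n.
suff E : \rank (\mxrow_(j < m1) (V j)^T) = n by move: cap; rewrite E.
apply/eqP; rewrite eqn_leq rank_leq_row /=.
apply: (@leq_trans (minn (m0 * m1) n)); first by rewrite (minn_idPr le_n).

rewrite -rW.
have -> : W = castmx (esym (sum_const_ordE m0 m1), erefl n)
                (\mxcol_(j < m1) (U j *m V j)).
  rewrite -(eq_mxcol hW) /rowslice submxcolK castmx_comp castmx_id //.
rewrite rank_cast -mxrank_tr tr_mxcol.
have -> : \mxrow_(j < m1) (U j *m V j)^T = \mxrow_(j < m1) ((V j)^T *m (U j)^T).
  by apply/eq_mxrow => j; rewrite trmx_mul.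
exact: col_upper.
Qed.
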